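(* In generalized non-signalling theory (box world), a measurement $M=\{(r,\mu_r)\}$ on a system of boxes is maximally informative if and only if every effect $\mu_r$ can be represented by a vector with exactly one non-zero entry, that entry lying between $0$ and $1$.
   Context: Box world (GNST): a box has a finite set of inputs $x$ and outputs $a$. A system of $n$ boxes has states $\mathbf{p}$ given by all collections $p(\mathbf{a}|\mathbf{x})=p(a_1,\ldots,a_n|x_1,\ldots,x_n)\ge 0$ with $\sum_{\mathbf{a}}p(\mathbf{a}|\mathbf{x})=1$ for all $\mathbf{x}$ and satisfying no-signalling: for each $i$, $\sum_{a_i}p(\mathbf{a}|\mathbf{x})$ does not depend on $x_i$. An effect is any linear map $\mu$ from states to $[0,1]$; a vector $\mathbf{R}$ indexed by pairs $(\mathbf{a},\mathbf{x})$ represents $\mu$ if $\mu(\mathbf{p})=\sum_{\mathbf{a},\mathbf{x}}p(\mathbf{a}|\mathbf{x})R(\mathbf{a}|\mathbf{x})$ for all states. A measurement is a finite set $\{(r,\mu_r)\}$ of outcomes and effects with $\sum_r\mu_r$ equal to the constant map $1$; all such are allowed. A measurement $N=\{(s,\nu_s)\}$ refines $M=\{(r,\mu_r)\}$ if the outcome set of $N$ can be partitioned into sets $P_r$ with $\mu_r=\sum_{s\in P_r}\nu_s$ for each $r$; the refinement is trivial if $\nu_s$ is proportional to $\mu_r$ whenever $s\in P_r$. $M$ is maximally informative if it has no non-trivial refinement. *)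

(* Defs.v *)
From HB Require Import structures.
From mathcomp Require Import all_boot all_order all_algebra.
From mathcomp Require Import reals.
Set Implicit Arguments. Unset Strict Implicit. Unset Printing Implicit Defensive.
Import Order.TTheory GRing.Theory Num.Theory.
Local Open Scope ring_scope.

(* A system of [n] boxes; box [i] has finite input set [X i] and output set [A i]. *)
Definition ins (n : nat) (X : 'I_n -> finType) : finType :=
  {dffun forall i : 'I_n, X i}.
Definition outs (n : nat) (A : 'I_n -> finType) : finType :=
  {dffun forall i : 'I_n, A i}.

(* Vectors indexed by pairs (a, x); states p(a|x) are such vectors. *)
Definition boxvec (R : realType) (n : nat) (X A : 'I_n -> finType) :=
  outs A -> ins X -> R.

(* No-signalling: for each i, sum_{a_i} p(a|x) does not depend on x_i. *)
Definition no_signalling (R : realType) n (X A : 'I_n -> finType)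
    (p : boxvec R X A) : Prop :=
  forall (i : 'I_n) (a : outs A) (x x' : ins X),
    (forall j : 'I_n, j != i -> x j = x' j) ->
    \sum_(a' : outs A | [forall j : 'I_n, (j != i) ==> (a' j == a j)]) p a' x =
    \sum_(a' : outs A | [forall j : 'I_n, (j != i) ==> (a' j == a j)]) p a' x'.

Definition is_state (R : realType) n (X A : 'I_n -> finType)
    (p : boxvec R X A) : Prop :=
  [/\ (forall a x, 0 <= p a x),
      (forall x, \sum_(a : outs A) p a x = 1) &
      no_signalling p].

(* An effect: a map from states to [0,1] that is linear on states, i.e.
   preserves convex combinations of states (the state set is convex). *)
Definition is_effect (R : realType) n (X A : 'I_n -> finType)
    (mu : boxvec R X A -> R) : Prop :=
  (forall p, is_state p -> 0 <= mu p <= 1) /\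
  (forall (p q : boxvec R X A) (t : R), is_state p -> is_state q -> 0 <= t <= 1 ->
     mu (fun a x => t * p a x + (1 - t) * q a x) = t * mu p + (1 - t) * mu q).

Definition represents (R : realType) n (X A : 'I_n -> finType)
    (mu : boxvec R X A -> R) (Rv : boxvec R X A) : Prop :=
  forall p, is_state p ->
    mu p = \sum_(a : outs A) \sum_(x : ins X) p a x * Rv a x.

Definition is_measurement (R : realType) n (X A : 'I_n -> finType) (O : finType)
    (mu : O -> boxvec R X A -> R) : Prop :=
  (forall r, is_effect (mu r)) /\
  (forall p, is_state p -> \sum_(r : O) mu r p = 1).

(* [nu] refines [mu] via the partition of the outcomes of [nu] into the
   blocks P_r = f^{-1}(r). Equality of effects = equality as maps on states. *)
Definition refines_via (R : realType) n (X A : 'I_n -> finType) (O S : finType)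
    (mu : O -> boxvec R X A -> R) (nu : S -> boxvec R X A -> R) (f : S -> O) : Prop :=
  forall (r : O) p, is_state p -> mu r p = \sum_(s : S | f s == r) nu s p.

Definition trivial_refinement (R : realType) n (X A : 'I_n -> finType) (O S : finType)
    (mu : O -> boxvec R X A -> R) (nu : S -> boxvec R X A -> R) (f : S -> O) : Prop :=
  forall s : S, exists c : R, forall p, is_state p -> nu s p = c * mu (f s) p.

Definition max_informative (R : realType) n (X A : 'I_n -> finType) (O : finType)
    (mu : O -> boxvec R X A -> R) : Prop :=
  forall (S : finType) (nu : S -> boxvec R X A -> R) (f : S -> O),
    is_measurement nu -> refines_via mu nu f -> trivial_refinement mu nu f.

Definition one_entry_vec (R : realType) n (X A : 'I_n -> finType)
    (Rv : boxvec R X A) : Prop :=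
  exists (a : outs A) (x : ins X),
    [/\ Rv a x != 0, 0 <= Rv a x <= 1 &
        forall (a' : outs A) (x' : ins X), (a', x') != (a, x) -> Rv a' x' = 0].

(* Main.v *)
Require Import Defs.
From HB Require Import structures.
From mathcomp Require Import all_boot all_order all_algebra.
From mathcomp Require Import reals ring lra.
From Stdlib Require Import Classical FunctionalExtensionality.
Import Order.TTheory GRing.Theory Num.Theory.
Local Open Scope ring_scope.

Set Implicit Arguments. Unset Strict Implicit. Unset Printing Implicit Defensive.

Lemma fin_lb (R : realType) (T : finType) (P : T -> R -> Prop) :
  (forall t, exists c, 0 < c /\ forall c', 0 < c' <= c -> P t c') ->
  exists c, 0 < c /\ forall t, P t c.
Proof.
move=> h.
suff H : forall l : seq T, exists c, 0 < c /\
   forall t, t \in l -> forall c', 0 < c' <= c -> P t c'.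
  have [c [c0 hc]] := H (enum T).
  exists c; split => // t; apply: hc; rewrite ?mem_enum //.
  by rewrite c0 lexx.
elim=> [|t l [c2 [c20 h2]]]; first by exists 1; split => //; rewrite ltr01.
have [c1 [c10 h1]] := h t.
exists (if c1 <= c2 then c1 else c2); split; first by case: ifP.
move=> t'; rewrite inE => /orP[/eqP ->|tl] c' /andP[c'0 c'le].
  apply: h1; rewrite c'0 /=; case: ifP c'le => // /negbT; rewrite -ltNge => hh hc; lra.
apply: h2 => //; rewrite c'0 /=; case: ifP c'le => // hh hc; lra.
Qed.

Section Box.
Variables (R : realType) (n : nat) (X A : 'I_n -> finType).
Local Notation vec := (boxvec R X A).

Lemma ns_lin (p q : vec) (al be : R) :
  no_signalling p -> no_signalling q ->
  no_signalling (fun a x => al * p a x + be * q a x).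
Proof.
move=> hp hq i a x x' hx.
rewrite !big_split /= -!mulr_sumr (hp i a x x' hx) (hq i a x x' hx) //.
Qed.

Lemma sum_lin (p q : vec) (al be : R) x :
  \sum_(a : outs A) (al * p a x + be * q a x) =
  al * \sum_(a : outs A) p a x + be * \sum_(a : outs A) q a x.
Proof. by rewrite big_split /= -!mulr_sumr. Qed.

Lemma state_le1 (p : vec) a x : is_state p -> p a x <= 1.
Proof.
case=> h0 h1 _; rewrite -(h1 x) (bigD1 a) //= lerDl.
by apply: sumr_ge0 => b _; apply: h0.
Qed.

Lemma state_lin (p q : vec) (al be : R) :
  is_state p -> is_state q -> (forall a x, 0 <= al * p a x + be * q a x) ->
  al + be = 1 -> is_state (fun a x => al * p a x + be * q a x).
Proof.
move=> [_ hp1 hpn] [_ hq1 hqn] h0 hab; split => //.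
  by move=> x; rewrite sum_lin hp1 hq1 !mulr1.
exact: ns_lin.
Qed.

Lemma effect_mix (mu : vec -> R) (p q : vec) (t : R) :
  is_effect mu -> is_state p -> is_state q -> 0 <= t <= 1 ->
  mu (fun a x => t * p a x + (1 - t) * q a x) = t * mu p + (1 - t) * mu q.
Proof. by case=> _ h; apply: h. Qed.

Lemma state_mix (p q : vec) (t : R) :
  is_state p -> is_state q -> 0 <= t <= 1 ->
  is_state (fun a x => t * p a x + (1 - t) * q a x).
Proof.
move=> hp hq /andP[t0 t1]; apply: state_lin => //; last by ring.
move=> a x; case: hp => hp _ _; case: hq => hq _ _.
apply: addr_ge0; apply: mulr_ge0 => //; lra.
Qed.


Definition ldet (f : forall i, X i -> A i) : vec :=
  fun b y => if [forall j, b j == f j (y j)] then 1 else 0.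

Lemma ldet_eq (f : forall i, X i -> A i) (b : outs A) (y : ins X) :
  [forall j, b j == f j (y j)] = (b == [ffun j => f j (y j)]).
Proof.
apply/forallP/eqP => [h|->]; first by apply/ffunP => j; rewrite ffunE; apply/eqP.
by move=> j; rewrite ffunE.
Qed.

Lemma sum_pick (P : pred (outs A)) (g : outs A) :
  \sum_(b | P b) (if b == g then 1 else 0 : R) = if P g then 1 else 0.
Proof.
case: (boolP (P g)) => Pg.
  rewrite (bigD1 g) //= eqxx big1 ?addr0 // => b /andP[_ /negbTE ->] //.
apply: big1 => b Pb; case: eqP => // eb; rewrite eb in Pb; by rewrite Pb in Pg.
Qed.

Lemma ldet_state (f : forall i, X i -> A i) : is_state (ldet f).
Proof.
split.
- by move=> a x; rewrite /ldet; case: ifP.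
- move=> x; rewrite /ldet.
  under eq_bigr => b _ do rewrite ldet_eq.
  by rewrite (sum_pick predT).
- move=> i a x x' hx; rewrite /ldet.
  under eq_bigr => b _ do rewrite ldet_eq.
  under [RHS]eq_bigr => b _ do rewrite ldet_eq.
  rewrite !sum_pick; congr (if _ then _ else _).
  apply/forallP/forallP => h j; move: (h j);
  case: (boolP (j != i)) => //= ji; rewrite !ffunE // (hx j ji) //.
Qed.


Lemma ns_trivial (p : vec) (a : outs A) (x x' : ins X) :
  no_signalling p ->
  (forall i, x i != x' i -> forall c : A i, c = a i) -> p a x = p a x'.
Proof.
move=> hp htr.
pose y (m : nat) : ins X := [ffun i : 'I_n => if (i < m)%N then x' i else x i].
have y0 : y 0%N = x by apply/ffunP => i; rewrite ffunE.
have yn : y n = x' by apply/ffunP => i; rewrite ffunE ltn_ord.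
suff H : forall m, (m <= n)%N -> p a x = p a (y m) by rewrite -yn; apply: H.
elim=> [|m IH] hm; first by rewrite y0.
rewrite (IH (ltnW hm)).
pose i := Ordinal hm.
have hoff : forall j, j != i -> y m j = y m.+1 j.
  move=> j ji; rewrite !ffunE.
  have -> : (j < m.+1)%N = (nat_of_ord j == m) || (j < m)%N by rewrite ltnS leq_eqVlt.
  suff -> : (nat_of_ord j == m) = false by [].
  by apply/negbTE; apply: contra ji => /eqP e; apply/eqP/val_inj.
case: (boolP (x i == x' i)) => xi.
  congr (p a _); apply/ffunP => j; case: (boolP (j == i)) => [/eqP ->|ji].
    by rewrite !ffunE /= ltnS leqnn ltnn; apply/eqP.
  exact: hoff.
have := hp i a (y m) (y m.+1) hoff.
have Heq : forall b : outs A, [forall j, (j != i) ==> (b j == a j)] = (b == a).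
  move=> b; apply/forallP/eqP => [h|->]; last by move=> j; rewrite eqxx implybT.
  apply/ffunP => j; case: (boolP (j == i)) => [/eqP ->|ji].
    exact: (htr i xi).
  by move: (h j); rewrite ji => /eqP.
rewrite (eq_bigl _ _ Heq) (eq_bigl _ _ Heq) !big_pred1_eq //.
Qed.


Lemma sum_one (p Rv : vec) (a0 : outs A) (x0 : ins X) :
  (forall a' x', (a', x') != (a0, x0) -> Rv a' x' = 0) ->
  \sum_(a : outs A) \sum_(x : ins X) p a x * Rv a x = p a0 x0 * Rv a0 x0.
Proof.
move=> h; rewrite (bigD1 a0) //= (bigD1 x0) //= big1 ?addr0.
  rewrite big1 ?addr0 // => a aa0; apply: big1 => x _.
  by rewrite h ?mulr0 // xpair_eqE negb_and aa0.
by move=> x xx0; rewrite h ?mulr0 // xpair_eqE negb_and xx0 orbT.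
Qed.


Definition deg (e k : outs A * ins X) :=
  forall p : vec, is_state p -> p k.1 k.2 = p e.1 e.2.

Lemma nondeg_ldet (e k : outs A * ins X) :
  ~ deg e k -> exists f : forall i, X i -> A i,
    ldet f k.1 k.2 = 1 /\ ldet f e.1 e.2 = 0.
Proof.
case: e k => a x [b x'] /= hnd.
case: (boolP [exists i, ((x' i == x i) && (b i != a i)) ||
                        ((x' i != x i) && [exists c, c != a i])]).
  case/existsP=> i hi.
  pose g := fun j => odflt (a j) [pick c : A j | c != a j].
  pose f := fun j (y : X j) => if y == x' j then b j else g j.
  exists f; rewrite /ldet; split.
    by case: ifP => // /negbT /forallP[]; move=> j; rewrite /f eqxx.
  case: ifP => // /forallP /(_ i); rewrite /f.
  case/orP: hi => /andP[h1 h2].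
    by rewrite (eq_sym (x i)) h1 eq_sym (negbTE h2).
  rewrite (eq_sym (x i)) (negbTE h1) /g; case: pickP => [c /= hc /eqP hac|hn]; first by rewrite hac eqxx in hc.
  by case/existsP: h2 => c hc; rewrite hn in hc.
move=> hno; exfalso; apply: hnd => p hp /=.
have hi : forall i, ((x' i == x i) ==> (b i == a i)) &&
                    ((x' i != x i) ==> [forall c, c == a i]).
  move=> i; apply/andP; split; apply/implyP => h.
    by apply: contraR hno => hb; apply/existsP; exists i; rewrite h hb.
  apply/forallP => c; apply: contraR hno => hc; apply/existsP; exists i.
  by rewrite h /=; apply/orP; right; apply/existsP; exists c.
have eb : b = a.
  apply/ffunP => i; have /andP[h1 h2] := hi i.
  case: (boolP (x' i == x i)) h1 h2 => [e1 /implyP/(_ isT)/eqP //|e1 _ /implyP/(_ isT)/forallP/(_ (b i))/eqP //].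
rewrite eb; symmetry; apply: ns_trivial; first by case: hp.
move=> i hxi c; have /andP[_ /implyP h2] := hi i.
have hx2 : x' i != x i by rewrite eq_sym.
by move: (h2 hx2) => /forallP/(_ c)/eqP.
Qed.


Lemma face_witness (e : outs A * ins X) :
  (exists w : vec, [/\ is_state w, w e.1 e.2 = 0 &
      forall k : outs A * ins X, deg e k \/ 0 < w k.1 k.2])
  \/ (forall k, deg e k).
Proof.
suff H : forall l : seq (outs A * ins X),
  (exists w : vec, [/\ is_state w, w e.1 e.2 = 0 &
      forall k, k \in l -> deg e k \/ 0 < w k.1 k.2])
  \/ (forall k, k \in l -> deg e k).
  case: (H (enum (predT : pred (outs A * ins X)))) => [[w [h1 h2 h3]]|h]; [left; exists w; split => // k|right => k];
  [apply: h3|apply: h]; by rewrite mem_enum.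
elim=> [|k l [[w [w1 w2 w3]]|IH]]; first by right.
- case: (classic (deg e k)) => hk.
    left; exists w; split => // k'; rewrite inE => /orP[/eqP ->|]; [by left|exact: w3].
  have [f [f1 f2]] := nondeg_ldet hk.
  left; exists (fun a x => 2^-1 * w a x + (1 - 2^-1) * ldet f a x); split.
  + by apply: state_mix => //; [exact: ldet_state|lra].
  + by rewrite w2 f2; ring.
  + move=> k'; rewrite inE => /orP[/eqP ->|/w3 [|h]]; first (right; rewrite f1).
    * case: w1 => w0 _ _; have := w0 k.1 k.2; lra.
    * by left.
    * right; have : 0 <= ldet f k'.1 k'.2 by case: (ldet_state f) => h0 _ _; apply: h0.
      lra.
- case: (classic (deg e k)) => hk.
    by right => k'; rewrite inE => /orP[/eqP ->|/IH].
  have [f [f1 f2]] := nondeg_ldet hk.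
  left; exists (ldet f); split => //; first exact: ldet_state.
  move=> k'; rewrite inE => /orP[/eqP ->|/IH]; [rewrite f1; right; lra|by left].
Qed.


Lemma facet (nu : vec -> R) (e : outs A * ins X) :
  is_effect nu ->
  (forall z, is_state z -> z e.1 e.2 = 0 -> nu z = 0) ->
  forall p q, is_state p -> is_state q ->
  q e.1 e.2 * nu p = p e.1 e.2 * nu q.
Proof.
move=> hnu hz p q hp hq.
have nu0 : forall z, is_state z -> 0 <= nu z.
  by case: hnu => h _ z hzs; case/andP: (h z hzs).
have [hp0 hp1 hpn] := hp; have [hq0 hq1 hqn] := hq.
have al0 : 0 <= p e.1 e.2 by apply: hp0.
have be0 : 0 <= q e.1 e.2 by apply: hq0.
case: (eqVneq (p e.1 e.2) 0) => [ea|na]; first by rewrite (hz p hp ea) ea; ring.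
case: (eqVneq (q e.1 e.2) 0) => [eb|nb]; first by rewrite (hz q hq eb) eb; ring.
have alp : 0 < p e.1 e.2 by rewrite lt_def na al0.
have bep : 0 < q e.1 e.2 by rewrite lt_def nb be0.
case: (face_witness e) => [[w [w1 w2 w3]]|hall]; last first.
  have hsum : forall z, is_state z -> (#|outs A|%:R : R) * z e.1 e.2 = 1.
    move=> z hzs; case: (hzs) => _ h1 _; rewrite -[RHS](h1 e.2).
    rewrite (eq_bigr (fun _ => z e.1 e.2)); last by move=> b _; apply: (hall (b, e.2) z hzs).
    by rewrite sumr_const mulr_natl.
  have hpq : p e.1 e.2 = q e.1 e.2.
    have h1 := hsum p hp; have h2 := hsum q hq.
    have hN : (#|outs A|%:R : R) != 0 by apply/eqP => h; rewrite h mul0r in h1; move: h1; apply/eqP; rewrite eq_sym oner_eq0.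
    by apply: (mulfI hN); rewrite h1 h2.
  have epq : p = q.
    apply: functional_extensionality => b; apply: functional_extensionality => y.
    by rewrite (hall (b, y) p hp) (hall (b, y) q hq).
  by rewrite epq.
have [hw0 hw1 hwn] := w1.
have : exists c : R, 0 < c /\ forall k : outs A * ins X, 0 < w k.1 k.2 -> c <= w k.1 k.2.
  apply: (@fin_lb R _ (fun (k : outs A * ins X) (c : R) => 0 < w k.1 k.2 -> c <= w k.1 k.2)).
  move=> k; case: (boolP (0 < w k.1 k.2)) => hk.
    by exists (w k.1 k.2); split => // c' /andP[_ h] _.
  by exists 1; split => // c' _ h; rewrite h in hk.
case=> c [c0 hc].
pose d := p e.1 e.2 / c.
have d0 : 0 < d by rewrite /d divr_gt0.
have dc : d * c = p e.1 e.2 by rewrite /d divfK // gt_eqF.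
pose s := d + p e.1 e.2.
pose D := s + q e.1 e.2 - p e.1 e.2.
have D0 : 0 < D by rewrite /D /s; lra.
pose r2 : vec := fun b y => (q e.1 e.2 * p b y - p e.1 e.2 * q b y + s * w b y) / D.
have r2s : is_state r2.
  split.
  + move=> b y; rewrite /r2; apply: divr_ge0; last lra.
    case: (w3 (b, y)) => [hd|hw].
      rewrite (hd p hp) (hd q hq) /=.
      rewrite (_ : q e.1 e.2 * p e.1 e.2 - p e.1 e.2 * q e.1 e.2 = 0); last ring.
      rewrite add0r; apply: mulr_ge0; [rewrite /s; lra|apply: hw0].
    have h1 := hc (b, y) hw; have h2 := state_le1 b y hq.
    have h3 := hq0 b y; have h4 := hp0 b y. rewrite /= in h1 hw.
    have g1 : p e.1 e.2 * q b y <= p e.1 e.2 by rewrite ler_piMr.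
    have g2 : p e.1 e.2 <= d * w b y by rewrite -dc ler_pM2l.
    have g3 : 0 <= q e.1 e.2 * p b y by apply: mulr_ge0.
    have g4 : 0 <= p e.1 e.2 * w b y by apply: mulr_ge0 => //; apply: hw0.
    rewrite /s mulrDl; lra.
  + move=> y; rewrite /r2 -mulr_suml !big_split /= sumrN -!mulr_sumr hp1 hq1 hw1 !mulr1.
    by rewrite /D; field; rewrite -/D; apply: lt0r_neq0.
  + move=> i a x x' hx; rewrite /r2 -!mulr_suml !big_split /= !sumrN -!mulr_sumr.
    by rewrite (hpn i a x x' hx) (hqn i a x x' hx) (hwn i a x x' hx).
have r2e : r2 e.1 e.2 = 0.
  rewrite /r2 w2 (_ : _ + _ = 0) ?mul0r //; ring.
pose T := q e.1 e.2 + s.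
have T0 : 0 < T by rewrite /T /s; lra.
have mixeq : (fun b y => (q e.1 e.2 / T) * p b y + (1 - q e.1 e.2 / T) * w b y) =
             (fun b y => (p e.1 e.2 / T) * q b y + (1 - p e.1 e.2 / T) * r2 b y).
  apply: functional_extensionality => b; apply: functional_extensionality => y.
  rewrite /r2 /D /T /s; field.
  by apply/andP; split; apply: lt0r_neq0; lra.
have t1 : 0 <= q e.1 e.2 / T <= 1.
  apply/andP; split; first by rewrite divr_ge0 //; lra.
  by rewrite ler_pdivrMr // mul1r /T /s; lra.
have t2 : 0 <= p e.1 e.2 / T <= 1.
  apply/andP; split; first by rewrite divr_ge0 //; lra.
  by rewrite ler_pdivrMr // mul1r /T /s; lra.
have E1 := effect_mix hnu hp w1 t1.
have E2 := effect_mix hnu hq r2s t2.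
rewrite mixeq E2 (hz w w1 w2) (hz r2 r2s r2e) !mulr0 !addr0 in E1.
have hT : T != 0 by rewrite gt_eqF.
apply: (mulIf (invr_neq0 hT)); rewrite mulrAC [RHS]mulrAC.
by rewrite E1.
Qed.

End Box.


Section Box2.
Variables (R : realType) (n : nat) (X A : 'I_n -> finType).
Local Notation vec := (boxvec R X A).

Lemma zero_support (mu : vec -> R) (e0 : outs A * ins X) :
  is_effect mu -> (exists p, is_state p /\ mu p != 0) ->
  exists e : outs A * ins X, forall z, is_state z -> mu z = 0 -> z e.1 e.2 = 0.
Proof.
move=> hmu [p [hp hpn]].
case: (classic (exists e : outs A * ins X, forall z, is_state z -> mu z = 0 -> z e.1 e.2 = 0)) => // hne.
exfalso.
have hz : forall e : outs A * ins X, exists z, [/\ is_state z, mu z = 0 & 0 < z e.1 e.2].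
  move=> e; apply: NNPP => hn; apply: hne; exists e => z hzs hmz.
  apply: NNPP => hze; apply: hn; exists z; split => //.
  by case: hzs => h0 _ _; rewrite lt_def (h0 e.1 e.2) andbT; apply/eqP.
have hl : forall l : seq (outs A * ins X), exists z,
    [/\ is_state z, mu z = 0 & forall k, k \in l -> 0 < z k.1 k.2].
  elim=> [|k l [z [z1 z2 z3]]].
    by have [z [z1 z2 _]] := hz e0; exists z; split.
  have [zk [zk1 zk2 zk3]] := hz k.
  have ht : 0 <= (2^-1 : R) <= 1 by apply/andP; split; lra.
  exists (fun a x => 2^-1 * z a x + (1 - 2^-1) * zk a x); split.
  - exact: state_mix.
  - by rewrite (effect_mix hmu z1 zk1 ht) z2 zk2; ring.
  - move=> k'; rewrite inE => /orP[/eqP ->|kl].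
      have : 0 <= z k.1 k.2 by case: z1 => h _ _; apply: h.
      lra.
    have := z3 k' kl; have : 0 <= zk k'.1 k'.2 by case: zk1 => h _ _; apply: h.
    lra.
have [z [z1 z2 z3]] := hl (enum (predT : pred (outs A * ins X))).
have zpos : forall k : outs A * ins X, 0 < z k.1 k.2 by move=> k; apply: z3; rewrite mem_enum.
have : exists t : R, 0 < t /\ forall k : outs A * ins X, t <= z k.1 k.2 /\ t <= 2^-1.
  apply: (@fin_lb R _ (fun (k : outs A * ins X) (t : R) => t <= z k.1 k.2 /\ t <= 2^-1)).
  move=> k; exists (z k.1 k.2 / 2); split; first by have := zpos k; lra.
  have := zpos k; have := state_le1 k.1 k.2 z1 => h1 h2 c' /andP[_ hc']; split; lra.
case=> t [t0 ht].
have [hp0 hp1 hpns] := hp; have [hz0 hz1 hzns] := z1.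
have t1 : t <= 2^-1 by case: (ht e0).
pose q : vec := fun a x => (z a x - t * p a x) / (1 - t).
have qs : is_state q.
  split.
  - move=> a x; rewrite /q; apply: divr_ge0; last lra.
    have h1 := state_le1 a x hp; have h2 := hp0 a x; have [h3 _] := ht (a, x).
    rewrite /= in h3.
    have : t * p a x <= t by rewrite ler_piMr // ltW.
    lra.
  - move=> x; rewrite /q -mulr_suml big_split /= sumrN -mulr_sumr hz1 hp1 mulr1.
    by rewrite divff // gt_eqF //; lra.
  - move=> i a x x' hx; rewrite /q -!mulr_suml !big_split /= !sumrN -!mulr_sumr.
    by rewrite (hzns i a x x' hx) (hpns i a x x' hx).
have tt : 0 <= t <= 1 by apply/andP; split; lra.
have ez : z = (fun a x => t * p a x + (1 - t) * q a x).
  apply: functional_extensionality => a; apply: functional_extensionality => x.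
  rewrite /q; field; apply: lt0r_neq0; lra.
have := effect_mix hmu hp qs tt; rewrite -ez z2 => h.
have hq0 : 0 <= mu q by case: hmu => hb _; case/andP: (hb q qs).
have hpm : 0 <= mu p by case: hmu => hb _; case/andP: (hb p hp).
have : t * mu p <= 0.
  have : 0 <= (1 - t) * mu q by apply: mulr_ge0 => //; lra.
  lra.
rewrite pmulr_rle0 // => hle.
by move: hpn; rewrite eq_le hle hpm.
Qed.


Definition tangent (D : vec) :=
  (forall x, \sum_(a : outs A) D a x = 0) /\ no_signalling D.

Definition basic (v : vec) :=
  is_state v /\ forall D, tangent D -> (forall a x, v a x = 0 -> D a x = 0) ->
     forall a x, D a x = 0.

Definition supp (v : vec) : {set outs A * ins X} := [set k | v k.1 k.2 != 0].

Lemma exists_argmin (T : finType) (P : pred T) (F : T -> R) (k0 : T) :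
  P k0 -> exists k, P k /\ forall k', P k' -> F k <= F k'.
Proof.
move=> Pk0; case: (arg_minP F Pk0) => k Pk hk; exists k; split => // k' Pk'; exact: hk.
Qed.

Lemma push (p D : vec) (a0 : outs A) (x0 : ins X) :
  is_state p -> tangent D -> (forall a x, p a x = 0 -> D a x = 0) ->
  D a0 x0 < 0 ->
  exists t : R, [/\ 0 < t, is_state (fun a x => p a x + t * D a x) &
     (#|supp (fun a x => (p a x + t * D a x)%R)| < #|supp p|)%N].
Proof.
move=> [hp0 hp1 hpns] [hD1 hDns] hsub hneg.
have [k [Pk hk]] := @exists_argmin _ (fun k : outs A * ins X => D k.1 k.2 < 0)
   (fun k => p k.1 k.2 / - D k.1 k.2) (a0, x0) hneg.
rewrite /= in Pk.
have pk0 : 0 < p k.1 k.2.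
  rewrite lt_def hp0 andbT; apply/eqP => h; move: (hsub _ _ h) => h'.
  by rewrite h' ltxx in Pk.
exists (p k.1 k.2 / - D k.1 k.2); split.
- by rewrite divr_gt0 // oppr_gt0.
- split.
  + move=> a x; case: (lerP 0 (D a x)) => hDa.
      by apply: addr_ge0 => //; apply: mulr_ge0 => //; rewrite divr_ge0 // ?oppr_ge0 ?ltW.
    have := hk (a, x) hDa; rewrite /= -(ler_pM2r (x := - D a x)) ?oppr_gt0 //.
    rewrite divfK ?oppr_eq0 ?lt_eqF // => h.
    rewrite mulrN in h; move: h; set tt := (p k.1 k.2 / - D k.1 k.2); lra.
  + move=> x; rewrite big_split /= -mulr_sumr hp1 hD1; ring.
  + move=> i a x x' hx; rewrite !big_split /= -!mulr_sumr.
    by rewrite (hpns i a x x' hx) (hDns i a x x' hx).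
- apply: proper_card; apply/properP; split.
    apply/subsetP => j; rewrite !inE; apply: contra => /eqP h.
    by rewrite h (hsub _ _ h) mulr0 addr0.
  exists k; rewrite !inE; first by rewrite gt_eqF.
  rewrite negbK; apply/eqP.
  by rewrite invrN mulrN mulNr divfK ?lt_eqF // subrr.
Qed.


Lemma tangent_neg_entry (D : vec) (a0 : outs A) (x0 : ins X) :
  tangent D -> 0 < D a0 x0 -> exists a, D a x0 < 0.
Proof.
move=> [hD1 _] hpos; apply: NNPP => hn.
have hge : forall a, 0 <= D a x0.
  by move=> a; rewrite leNgt; apply/negP => h; apply: hn; exists a.
have := hD1 x0; rewrite (bigD1 a0) //= => h.
have : 0 <= \sum_(a | a != a0) D a x0 by apply: sumr_ge0 => a _.
lra.
Qed.

Lemma tangent_opp (D : vec) : tangent D -> tangent (fun a x => - D a x).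
Proof.
move=> [hD1 hDn]; split; first by move=> x; rewrite sumrN hD1 oppr0.
by move=> i a x x' hx; rewrite !sumrN (hDn i a x x' hx).
Qed.

Lemma lower_bound (mu : vec -> R) (e : outs A * ins X) (c : R) :
  is_effect mu -> (forall v, basic v -> c * v e.1 e.2 <= mu v) ->
  forall p, is_state p -> c * p e.1 e.2 <= mu p.
Proof.
move=> hmu hb.
suff H : forall N p, (#|supp p| < N)%N -> is_state p -> c * p e.1 e.2 <= mu p.
  by move=> p hp; apply: (H _ p (ltnSn _) hp).
elim=> [//|N IH] p hN hp.
case: (classic (basic p)) => hbp; first exact: hb.
have : exists D, [/\ tangent D, (forall a x, p a x = 0 -> D a x = 0) &
                     exists a x, D a x != 0].
  apply: NNPP => hn; apply: hbp; split => // D hD hs a x; apply: NNPP => hDa.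
  by apply: hn; exists D; split => //; exists a, x; apply/eqP.
case=> D [hD hs [a0 [x0 hD0]]].
have [[a1 ha1] [a2 ha2]] : (exists a, D a x0 < 0) /\ (exists a, - D a x0 < 0).
  case: (ltgtP (D a0 x0) 0) => h.
  - split; first by exists a0.
    by apply: (tangent_neg_entry (a0 := a0) (tangent_opp hD)); rewrite oppr_gt0.
  - split; first exact: (tangent_neg_entry hD h).
    by exists a0; rewrite oppr_lt0.
  - by rewrite h eqxx in hD0.
have hs' : forall a x, p a x = 0 -> - D a x = 0 by move=> a x h; rewrite (hs a x h) oppr0.
have [t2 [t2p q1s q1c]] := push hp hD hs ha1.
have [t1 [t1p q2s q2c]] := push hp (tangent_opp hD) hs' ha2.
pose l := t1 / (t1 + t2).
have hl : 0 <= l <= 1.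
  apply/andP; split; first by rewrite divr_ge0 //; lra.
  by rewrite ler_pdivrMr ?mul1r; lra.
have ep : p = (fun a x => l * (p a x + t2 * D a x) + (1 - l) * (p a x + t1 * - D a x)).
  apply: functional_extensionality => a; apply: functional_extensionality => x.
  by rewrite /l; field; apply: lt0r_neq0; lra.
have IH1 := IH _ (leq_trans q1c hN) q1s.
have IH2 := IH _ (leq_trans q2c hN) q2s.
rewrite ep (effect_mix hmu q1s q2s hl) /= mulrDr.
apply: lerD; rewrite mulrCA; apply: ler_wpM2l => //; lra.
Qed.


Lemma uniq_basic (v w : vec) : basic v -> basic w -> supp v = supp w -> v = w.
Proof.
move=> [[hv0 hv1 hvn] hvb] [[hw0 hw1 hwn] _] hs.
have hD : tangent (fun a x => v a x - w a x).
  split; first by move=> x; rewrite sumrB hv1 hw1 subrr.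
  by move=> i a x x' hx; rewrite !sumrB (hvn i a x x' hx) (hwn i a x x' hx).
have hsub : forall a x, v a x = 0 -> v a x - w a x = 0.
  move=> a x h; have : (a, x) \notin supp w by rewrite -hs inE /= h eqxx.
  by rewrite inE /= negbK h => /eqP ->; rewrite subrr.
have := hvb _ hD hsub => h0.
apply: functional_extensionality => a; apply: functional_extensionality => x.
by apply/eqP; rewrite -subr_eq0; apply/eqP; apply: h0.
Qed.

Lemma c_exists (mu : vec -> R) (e : outs A * ins X) :
  is_effect mu -> (forall z, is_state z -> mu z = 0 -> z e.1 e.2 = 0) ->
  exists c, 0 < c /\ forall v, basic v -> c * v e.1 e.2 <= mu v.
Proof.
move=> hmu hz.
have mu0 : forall z, is_state z -> 0 <= mu z.
  by case: hmu => h _ z hzs; case/andP: (h z hzs).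
have [c [c0 hc]] : exists c : R, 0 < c /\ forall S : {set outs A * ins X},
    forall v, basic v -> supp v = S -> c * v e.1 e.2 <= mu v.
  apply: (@fin_lb R _ (fun S c => forall v, basic v -> supp v = S -> c * v e.1 e.2 <= mu v)).
  move=> S.
  case: (classic (exists v, [/\ basic v, supp v = S & 0 < v e.1 e.2])).
    case=> v0 [hb0 hs0 hpos0].
    have hm0 : 0 < mu v0.
      rewrite lt_def mu0; last by case: hb0.
      by rewrite andbT; apply/eqP => h; move: (hz v0 (proj1 hb0) h); apply/eqP; rewrite gt_eqF.
    exists (mu v0 / v0 e.1 e.2); split; first by rewrite divr_gt0.
    move=> c' /andP[c'0 c'le] v hb hs.
    have evv : v = v0 by apply: uniq_basic => //; rewrite hs hs0.
    by rewrite evv; rewrite -(ler_pM2r hpos0) divfK ?gt_eqF // in c'le.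
  move=> hn; exists 1; split => // c' _ v hb hs.
  have hv0 : v e.1 e.2 = 0.
    have h0 : 0 <= v e.1 e.2 by case: hb => [[h _ _] _]; apply: h.
    apply/eqP; rewrite eq_le h0 andbT leNgt.
    by apply/negP => h; apply: hn; exists v; split.
  by rewrite hv0 mulr0; apply: mu0; case: hb.
by exists c; split => // v hb; apply: (hc (supp v)).
Qed.

End Box2.

Unset Implicit Arguments.

Lemma sum_unit (R : realType) (F : unit -> R) : \sum_(u : unit) F u = F tt.
Proof. by rewrite (bigD1 tt) //= big1 ?addr0 // => -[]. Qed.

Theorem lemma3 (R : realType) (n : nat) (X A : 'I_n -> finType)
    (hX : forall i : 'I_n, (0 < #|X i|)%N) (hA : forall i : 'I_n, (0 < #|A i|)%N)
    (O : finType) (mu : O -> boxvec R X A -> R) :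
  is_measurement mu ->
  (forall r : O, exists p : boxvec R X A, is_state p /\ mu r p != 0) ->
  (max_informative mu <->
   forall r : O, exists Rv : boxvec R X A, represents (mu r) Rv /\ one_entry_vec Rv).
Proof.
move=> [hmeff hmsum] hnz.
pose x0 : ins X := [ffun i => xchoose (card_gt0P (hX i))].
pose a0 : outs A := [ffun i => xchoose (card_gt0P (hA i))].
have dstate : forall (a : outs A) (x : ins X),
    is_state (ldet R (fun i (_ : X i) => a i)) /\ ldet R (fun i (_ : X i) => a i) a x = 1.
  move=> a x; split; first exact: ldet_state.
  by rewrite /ldet; case: ifP => // /negbT /forallP[]; move=> j; rewrite eqxx.
split.
- move=> hmax r.
  have [e he] := zero_support (a0, x0) (hmeff r) (hnz r).
  case: e he => a x he.
  have [c [c0 hcb]] := c_exists (e := (a, x)) (hmeff r) he.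
  have hlb := lower_bound (hmeff r) hcb.
  rewrite /= in hlb.
  have [hb hmix] := hmeff r.
  pose S := (O + unit)%type.
  pose nu : S -> boxvec R X A -> R := fun s => match s with
    | inl r' => if r' == r then (fun p => mu r p - c * p a x) else mu r'
    | inr _ => (fun p => c * p a x) end.
  pose f : S -> O := fun s => match s with inl r' => r' | inr _ => r end.
  have pe0 : forall p, is_state p -> 0 <= c * p a x.
    by move=> p hp; apply: mulr_ge0; [lra | case: hp => h _ _; apply: h].
  have hmeas : is_measurement nu.
    split.
    - case=> [r'|u] /=.
      + case: eqP => [_|_]; last exact: hmeff.
        split.
        * move=> p hp; have := hlb p hp; have := pe0 p hp; case/andP: (hb p hp) => h1 h2 h3 h4.
          apply/andP; split; lra.
        * by move=> p q t hp hq ht; rewrite hmix //; ring.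
      + split.
        * move=> p hp; have := hlb p hp; have := pe0 p hp; case/andP: (hb p hp) => h1 h2 h3 h4.
          apply/andP; split; lra.
        * by move=> p q t hp hq ht; ring.
    - move=> p hp; rewrite big_sumType /= sum_unit (bigD1 r) //= eqxx.
      rewrite (eq_bigr (fun r' => mu r' p)); last by move=> r' /negbTE ->.
      have := hmsum p hp; rewrite (bigD1 r) //= => h; lra.
  have href : refines_via mu nu f.
    move=> r' p hp; rewrite big_sumType /=.
    case: (eqVneq r r') => [<-|hne].
      by rewrite big_pred1_eq eqxx big_mkcond /= sum_unit; ring.
    rewrite big_pred1_eq big_pred0_eq addr0.
    by rewrite eq_sym (negbTE hne).
  have [k hk] := hmax S nu f hmeas href (inr tt).
  have [hq0s hq0e] := dstate a x.
  have hk0 := hk _ hq0s; rewrite /= hq0e mulr1 in hk0.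
  set q0 := ldet R (fun i (_ : X i) => a i) in hq0s hq0e hk0.
  have kn0 : k != 0 by apply/eqP => h; rewrite h mul0r in hk0; lra.
  have hmr_eq : forall p, is_state p -> mu r p = p a x * mu r q0.
    move=> p hp; apply: (mulfI kn0); have := hk p hp; rewrite /= => <-.
    by rewrite hk0; ring.
  exists (fun b y => if (b, y) == (a, x) then mu r q0 else 0); split.
    move=> p hp; rewrite (sum_one _ (a0 := a) (x0 := x)); first by rewrite eqxx; exact: hmr_eq.
    by move=> a' x' /negbTE ->.
  exists a, x; rewrite eqxx; split.
  + by apply/eqP => hm; rewrite hm mulr0 in hk0; lra.
  + exact: hb.
  + by move=> a' x' /negbTE ->.
- move=> hrep S nu f [hneff hnsum] href s.
  have [Rv [hrepr [a [x [hne hrng hz]]]]] := hrep (f s).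
  have m0 : 0 < Rv a x by rewrite lt_def hne; case/andP: hrng.
  have hmu : forall p, is_state p -> mu (f s) p = p a x * Rv a x.
    by move=> p hp; rewrite hrepr // (sum_one _ hz).
  have hle : forall p, is_state p -> nu s p <= mu (f s) p.
    move=> p hp; rewrite (href (f s) p hp) (bigD1 s) //= lerDl.
    apply: sumr_ge0 => s' _; case: (hneff s') => hb _; by case/andP: (hb p hp).
  have hz0 : forall z, is_state z -> z (a, x).1 (a, x).2 = 0 -> nu s z = 0.
    move=> z hzs /= hze; apply/eqP; rewrite eq_le.
    have := hle z hzs; rewrite hmu // hze mul0r => ->.
    by case: (hneff s) => hb _; case/andP: (hb z hzs).
  have [hq0s hq0e] := dstate a x.
  exists (nu s (ldet R (fun i (_ : X i) => a i)) / Rv a x) => p hp.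
  have := facet (e := (a, x)) (hneff s) hz0 hp hq0s; rewrite /= hq0e mul1r => ->.
  by rewrite hmu //; field; rewrite gt_eqF.
Qed.
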